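(* Suppose that for each $k=1,\dots,K$ the Markov kernel $p_k$ on $\Theta$ is $\mu_k$-reversible. For $\sigma\in S_K$ define the swapped kernel $\mathbf p_\sigma(\boldsymbol\theta,\cdot)=p_{\sigma(1)}(\theta_1,\cdot)\times\dots\times p_{\sigma(K)}(\theta_K,\cdot)$, the swapped density $\boldsymbol\pi_\sigma(\boldsymbol\theta)=\prod_{k=1}^K\pi_{\sigma(k)}(\theta_k)$, and the weights $w_\sigma(\boldsymbol\theta)=\boldsymbol\pi_\sigma(\boldsymbol\theta)/\sum_{\sigma'\in S_K}\boldsymbol\pi_{\sigma'}(\boldsymbol\theta)$. Let the Weighted Generalized Parallel Tempering kernel be $\mathbf p^{(\mathrm W)}(\boldsymbol\theta,\cdot)=\sum_{\sigma\in S_K}w_\sigma(\boldsymbol\theta)\mathbf p_\sigma(\boldsymbol\theta,\cdot)$, and let $\boldsymbol\mu_{\mathrm W}=\frac{1}{|S_K|}\sum_{\sigma\in S_K}\boldsymbol\mu_\sigma$, where $\boldsymbol\mu_\sigma=\mu_{\sigma(1)}\times\dots\times\mu_{\sigma(K)}$; equivalently $\boldsymbol\mu_{\mathrm W}$ has $\boldsymbol\mu_{\mathrm{pr}}$-density $\boldsymbol\pi_{\mathrm W}=\frac{1}{|S_K|}\sum_{\sigma\in S_K}\boldsymbol\pi_\sigma$. Then the Markov chain generated by $\mathbf p^{(\mathrm W)}$ is $\boldsymbol\mu_{\mathrm W}$-reversible.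
   Context: Let $\Theta$ be a separable Banach space with Borel $\sigma$-algebra, $\mu_{\mathrm{pr}}$ a probability measure on $\Theta$, and $\Phi:\Theta\to\mathbb R$ a measurable potential. Fix $K\ge1$ and temperatures $1=T_1<\dots<T_K\le\infty$; $\mu_k$ is the probability measure with $\mu_{\mathrm{pr}}$-density $\pi_k(\theta)=e^{-\Phi(\theta)/T_k}/Z_k$, $Z_k=\int_\Theta e^{-\Phi/T_k}d\mu_{\mathrm{pr}}$ ($\mu_K=\mu_{\mathrm{pr}}$ if $T_K=\infty$). $\Theta^K$ carries the product $\sigma$-algebra, $\boldsymbol\mu_{\mathrm{pr}}=\mu_{\mathrm{pr}}^{\times K}$, and $S_K$ is a set of permutations of $\{1,\dots,K\}$ closed under inversion. A kernel $p$ is $\nu$-reversible if $\int_B p(\theta,A)\nu(d\theta)=\int_A p(\theta,B)\nu(d\theta)$ for all measurable $A,B$. *)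

(* Defs.v *)
From HB Require Import structures.
From mathcomp Require Import all_boot all_order all_algebra all_fingroup.
From mathcomp Require Import all_classical all_reals all_analysis.
Set Implicit Arguments. Unset Strict Implicit. Unset Printing Implicit Defensive.
Import Order.TTheory GRing.Theory Num.Theory.
Local Open Scope classical_set_scope.
Local Open Scope ring_scope.

Section defs.
Context {R : realType} {d : measure_display} {T : measurableType d}.

(* inverse temperature 1/T_k, with the convention 1/+oo = 0 *)
Definition invtemp (t : \bar R) : R :=
  match t with EFin r => r^-1 | _ => 0 end.

Definition tempered (Phi : T -> R) (t : \bar R) (x : T) : R :=
  expR (- (invtemp t * Phi x)).

Definition normconst (mupr : set T -> \bar R) (Phi : T -> R) (t : \bar R)
  : \bar R := (\int[mupr]_x (tempered Phi t x)%:E)%E.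

Definition tdensity (mupr : set T -> \bar R) (Phi : T -> R) (t : \bar R)
  (x : T) : R := tempered Phi t x / fine (normconst mupr Phi t).

Definition rect (K : nat) (A : 'I_K -> set T) : set (K.-tuple T) :=
  [set x | forall i, A i (tnth x i)].

Definition is_product_measure (K : nat) (m : 'I_K -> set T -> \bar R)
  (nu : set (K.-tuple T) -> \bar R) : Prop :=
  forall A : 'I_K -> set T, (forall i, measurable (A i)) ->
    nu (rect A) = (\prod_(i < K) m i (A i))%E.

Definition reversible {d' : measure_display} {X : measurableType d'}
  (p : X -> set X -> \bar R) (nu : set X -> \bar R) : Prop :=
  forall A B : set X, measurable A -> measurable B ->
    (\int[nu]_(x in B) p x A = \int[nu]_(x in A) p x B)%E.

Definition swapped_density (K : nat) (pi : 'I_K -> T -> R)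
  (s : {perm 'I_K}) (th : K.-tuple T) : R :=
  \prod_(i < K) pi (s i) (tnth th i).

Definition swap_weight (K : nat) (pi : 'I_K -> T -> R)
  (SK : {set {perm 'I_K}}) (s : {perm 'I_K}) (th : K.-tuple T) : R :=
  swapped_density pi s th / \sum_(s' in SK) swapped_density pi s' th.

Definition wgpt_kernel (K : nat) (pi : 'I_K -> T -> R)
  (SK : {set {perm 'I_K}})
  (psig : {perm 'I_K} -> K.-tuple T -> set (K.-tuple T) -> \bar R)
  (th : K.-tuple T) (A : set (K.-tuple T)) : \bar R :=
  (\sum_(s in SK) (swap_weight pi SK s th)%:E * psig s th A)%E.

End defs.

(* Main.v *)
Set Warnings "-all".
Require Import Defs.
From HB Require Import structures.
From mathcomp Require Import all_boot all_order all_algebra all_fingroup.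
From mathcomp Require Import all_classical all_reals all_analysis.
From mathcomp Require Import measurable_realfun.
From mathcomp.algebra_tactics Require Import ring.
Import Order.TTheory GRing.Theory Num.Theory.
Local Open Scope classical_set_scope.
Local Open Scope ring_scope.

Section rects.
Context {R : realType} {d : measure_display} {T : measurableType d} (K : nat).
Local Notation X := (K.-tuple T).

Definition rects : set (set X) :=
  [set rect A | A in [set A : 'I_K -> set T | forall i, measurable (A i)]].

Lemma rectE (A : 'I_K -> set T) :
  rect A = \big[setI/setT]_(i < K) ((fun x : X => tnth x i) @^-1` A i).
Proof.
apply/seteqP; split => x.
  move=> Ax; rewrite -bigcap_seq; move=> i _; exact: Ax.
by rewrite -bigcap_seq => H i; apply: H; rewrite /= mem_index_enum.
Qed.

Lemma measurable_rect (A : 'I_K -> set T) :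
  (forall i, measurable (A i)) -> measurable (rect A).
Proof.
move=> mA; rewrite rectE; apply: bigsetI_measurable => i _.
by rewrite -[X in measurable X]setTI; apply: measurable_tnth.
Qed.

Lemma rect_setT : rect (fun _ => setT) = [set: X].
Proof. by apply/seteqP; split. Qed.

Lemma rectI (A B : 'I_K -> set T) : rect A `&` rect B = rect (fun i => A i `&` B i).
Proof.
apply/seteqP; split => x.
  by move=> [Ax Bx] i; split.
by move=> H; split => i; case: (H i).
Qed.

Lemma measurable_rects : @measurable _ X = <<s rects >>.
Proof.
apply/seteqP; split.
  apply: smallest_sub; first exact: smallest_sigma_algebra.
  move=> E; rewrite -bigcup_seq => -[i _ [B mB <-]].
  apply: sub_sigma_algebra.
  exists (fun k => if k == i then B else setT).
    by move=> k; case: ifP.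
  apply/seteqP; split => x.
    by move=> /(_ i); rewrite eqxx.
  move=> [_ Bx] k; case: ifPn => // /eqP ->; exact: Bx.
apply: smallest_sub; first exact: smallest_sigma_algebra.
by move=> E [A mA <-]; exact: measurable_rect.
Qed.

Lemma setI_closed_rects : setI_closed rects.
Proof.
move=> E F [A mA <-] [B mB <-]; rewrite rectI.
by exists (fun i => A i `&` B i) => // i; exact: measurableI.
Qed.

Lemma measure_unique_rect (m1 m2 : {measure set X -> \bar R}) :
  (m1 setT < +oo)%E ->
  (forall A : 'I_K -> set T, (forall i, measurable (A i)) -> m1 (rect A) = m2 (rect A)) ->
  forall E, measurable E -> m1 E = m2 E.
Proof.
move=> m1fin h12 E mE.
apply: (measure_unique rects (fun _ => setT)) => //.
- exact: measurable_rects.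
- exact: setI_closed_rects.
- move=> _; exists (fun _ => setT) => //; exact: rect_setT.
- by rewrite bigcup_const.
- by move=> _ [A mA <-]; exact: h12.
Qed.
End rects.

Section mdens.
Local Open Scope ereal_scope.
Context {R : realType} {d : measure_display} {X : measurableType d}.
Variables (mu : {measure set X -> \bar R}) (h : X -> \bar R).
Hypotheses (h0 : forall x, 0 <= h x) (mh : measurable_fun setT h).

Definition mdens (_ : forall x, 0 <= h x) (_ : measurable_fun setT h) (A : set X) : \bar R :=
  \int[mu]_(x in A) h x.
Local Notation md := (mdens h0 mh).

Let mdens0 : md set0 = 0. Proof. exact: integral_set0. Qed.
Let mdens_ge0 B : 0 <= md B. Proof. exact: integral_ge0. Qed.
Let mdens_sigma_additive : semi_sigma_additive md.
Proof.
move=> F mF tF mUF; rewrite /mdens ge0_integral_bigcup//.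
- by apply: is_cvg_ereal_nneg_natsum => k _; exact: integral_ge0.
- exact: measurable_funS mh.
Qed.

HB.instance Definition _ := isMeasure.Build _ _ _ md
  mdens0 mdens_ge0 mdens_sigma_additive.
End mdens.

Section mkint.
Local Open Scope ereal_scope.
Context {R : realType} {d d' : measure_display} {X : measurableType d} {Y : measurableType d'}.
Variables (mu : {measure set X -> \bar R}) (D : set X) (mD : measurable D)
  (k : X -> {measure set Y -> \bar R}).
Hypothesis mk : forall U, measurable U -> measurable_fun setT (k ^~ U).

Definition mkint (_ : forall U, measurable U -> measurable_fun setT (k ^~ U)) (B : set Y) : \bar R :=
  \int[mu]_(x in D) k x B.
Local Notation mi := (mkint mk).

Let mkint0 : mi set0 = 0.
Proof. by rewrite /mkint; under eq_integral do rewrite measure0; exact: integral0. Qed.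
Let mkint_ge0 B : 0 <= mi B. Proof. exact: integral_ge0. Qed.
Let mkint_sigma_additive : semi_sigma_additive mi.
Proof.
move=> F mF tF mUF; rewrite /mkint.
have -> : \int[mu]_(x in D) k x (\bigcup_n F n) = \int[mu]_(x in D) \sum_(n <oo) k x (F n).
  apply: eq_integral => x _; apply/esym/cvg_lim => //.
  exact: measure_semi_sigma_additive.
rewrite integral_nneseries//.
- by apply: is_cvg_ereal_nneg_natsum => n _; exact: integral_ge0.
- by move=> n; apply: (measurable_funS measurableT) => //; exact: mk.
Qed.

HB.instance Definition _ := isMeasure.Build _ _ _ mi
  mkint0 mkint_ge0 mkint_sigma_additive.
End mkint.

Section push_dens.
Local Open Scope ereal_scope.
Import HBNNSimple.
Context {R : realType} {d d' : measure_display} {X : measurableType d} {Y : measurableType d'}.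
Variables (mu : {measure set X -> \bar R}) (nu : {measure set Y -> \bar R})
  (phi : X -> Y) (h : X -> R) (c : R).
Hypotheses (mphi : measurable_fun setT phi) (h0 : forall x, (0 <= h x)%R)
  (mh : measurable_fun setT h) (c0 : (0 <= c)%R)
  (hyp : forall A, measurable A ->
     \int[mu]_x ((\1_A (phi x))%:E * (h x)%:E) = c%:E * nu A).

Lemma push_dens (f : Y -> \bar R) : (forall y, 0 <= f y) -> measurable_fun setT f ->
  \int[mu]_x (f (phi x) * (h x)%:E) = c%:E * \int[nu]_y f y.
Proof.
move=> f0 mf.
pose g := nnsfun_approx measurableT mf.
have fE y : f y = lim ((EFin \o g n) y @[n --> \oo]).
  by apply/esym/cvg_lim => //; exact: cvg_nnsfun_approx.
have mgphi n : measurable_fun setT (fun x => (g n (phi x))%:E).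
  apply/measurable_EFinP; apply: measurableT_comp => //.
have -> : \int[nu]_y f y = limn (fun n => \int[nu]_y (g n y)%:E).
  under eq_integral => y _ do rewrite fE.
  apply: monotone_convergence => //.
  - by move=> n; apply/measurable_EFinP.
  - by move=> n y _ /=; rewrite lee_fin.
  - by move=> y _ a b ab; rewrite lee_fin; exact/lefP/nd_nnsfun_approx.
have -> : \int[mu]_x (f (phi x) * (h x)%:E) =
    limn (fun n => \int[mu]_x ((g n (phi x))%:E * (h x)%:E)).
  have fg x : f (phi x) * (h x)%:E = lim (((g n (phi x))%:E * (h x)%:E) @[n --> \oo]).
    apply/esym/cvg_lim => //; apply: cvgeZr => //.
    exact: cvg_nnsfun_approx.
  under eq_integral => x _ do rewrite fg.
  apply: monotone_convergence => //.
  - move=> n; apply: emeasurable_funM => //; exact/measurable_EFinP.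
  - by move=> n x _; rewrite mule_ge0 ?lee_fin.
  - move=> x _ a b ab; rewrite lee_wpmul2r ?lee_fin//.
    exact/lefP/nd_nnsfun_approx.
have step n : \int[mu]_x ((g n (phi x))%:E * (h x)%:E) =
    c%:E * \int[nu]_y (g n y)%:E.
  transitivity (\int[mu]_x (\sum_(r \in range (g n))
      (r * \1_(g n @^-1` [set r]) (phi x))%:E * (h x)%:E)).
    apply: eq_integral => x _; rewrite fimfunE -fsumEFin//.
    by rewrite ge0_mule_fsuml// => r; exact: nnfun_muleindic_ge0.
  rewrite ge0_integral_fsum//; last 2 first.
  - move=> r; apply: emeasurable_funM; apply/measurable_EFinP => //.
    by apply: measurable_funM => //; apply: measurableT_comp.
  - by move=> r x _; rewrite mule_ge0 ?lee_fin// -lee_fin EFinM nnfun_muleindic_ge0.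
  transitivity (c%:E * \int[nu]_y (\sum_(r \in range (g n))
      (r * \1_(g n @^-1` [set r]) y)%:E)); last first.
    by congr (_ * _); apply: eq_integral => y _; rewrite fimfunE -fsumEFin.
  rewrite ge0_integral_fsum//; last 2 first.
  - move=> r; apply/measurable_EFinP.
    by apply: measurable_funM => //.
  - by move=> r y _; exact: nnfun_muleindic_ge0.
  rewrite ge0_mule_fsumr; last first.
    by move=> r; apply: integral_ge0 => y _; exact: nnfun_muleindic_ge0.
  apply: eq_fsbigr => r rgn.
  have r0 : (0 <= r)%R by move: rgn; rewrite inE => -[t _ <-].
  under eq_integral do rewrite EFinM -muleA.
  rewrite ge0_integralZl//.
  all: try (by move=> x _; rewrite mule_ge0 ?lee_fin).
  all: try (by apply: emeasurable_funM => //; apply/measurable_EFinP;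
    apply: measurableT_comp => //).
  rewrite (integralZl_indic_nnsfun _ measurableT).
  rewrite hyp//.
  rewrite integral_indic//.
  by rewrite setIT muleCA.
under eq_fun do rewrite step.
rewrite limeMl//.
apply: ereal_nondecreasing_is_cvgn => a b ab.
apply: ge0_le_integral => //.
all: try (by move=> y _; rewrite lee_fin).
all: try (by apply/measurable_EFinP).
by move=> y _; rewrite lee_fin; exact/lefP/nd_nnsfun_approx.
Qed.
End push_dens.

Section prodint.
Local Open Scope ereal_scope.
Context {R : realType} {d : measure_display} {T : measurableType d} (K : nat).
Local Notation X := (K.-tuple T).
Variables (P : {measure set X -> \bar R}) (m : 'I_K -> {measure set T -> \bar R}).
Hypotheses (mfin : forall i, m i setT < +oo)
  (hP : forall A : 'I_K -> set T, (forall i, measurable (A i)) ->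
     P (rect A) = \prod_(i < K) m i (A i)).

Definition okf (f : 'I_K -> T -> R) :=
  [/\ forall i x, (0 <= f i x)%R, forall i, measurable_fun setT (f i)
    & forall i, \int[m i]_x (f i x)%:E < +oo].

Lemma prodint_ind n : forall J : {set 'I_K}, #|J| = n -> forall f, okf f ->
  (forall i, i \notin J -> exists A, measurable A /\ f i = \1_A) ->
  \int[P]_x (\prod_(i < K) f i (tnth x i))%:E = \prod_(i < K) \int[m i]_x (f i x)%:E.
Proof.
elim: n => [|n IH] J cJ f [f0 mf fint] hJ.
  move/eqP: cJ; rewrite cards_eq0 => /eqP J0; subst J.
  have /choice [A hA] : forall i, exists A, measurable A /\ f i = \1_A.
    by move=> i; apply: hJ; rewrite inE.
  have mA i : measurable (A i) by case: (hA i).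
  have -> : (fun x : X => (\prod_(i < K) f i (tnth x i))%:E) = fun x => (\1_(rect A) x)%:E.
    apply/funext => x; congr EFin; rewrite indicE.
    have [Ax|nAx] := pselect (rect A x).
      rewrite mem_set// big1// => i _; case: (hA i) => _ ->.
      by rewrite indicE mem_set//; exact: Ax.
    rewrite memNset//; move/existsNP: nAx => [i nAi].
    rewrite (bigD1 i)//=; case: (hA i) => _ ->.
    by rewrite indicE memNset// mul0r.
  rewrite integral_indic//; last exact: measurable_rect.
  rewrite setIT hP//; apply: eq_bigr => i _; case: (hA i) => _ ->.
  by rewrite integral_indic// setIT.
have : (0 < #|J|)%N by rewrite cJ.
rewrite card_gt0 => /set0Pn [j jJ].
have cJ' : #|J :\ j| = n by move: cJ; rewrite (cardsD1 j) jJ add1n => -[].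
pose c := \prod_(i < K | i != j) \int[m i]_x (f i x)%:E.
have cfin : c \is a fin_num.
  apply: (big_ind (fun x => x \is a fin_num)) => //.
    by move=> a b; exact: fin_numM.
  move=> i _; rewrite ge0_fin_numE//; apply: integral_ge0 => x _.
  by rewrite lee_fin.
have c0 : 0 <= c by apply: prode_ge0 => i _; apply: integral_ge0 => x _; rewrite lee_fin.
pose h (x : X) := (\prod_(i <- [seq i <- index_enum 'I_K | i != j]) f i (tnth x i))%R.
have h0 x : (0 <= h x)%R by apply: prodr_ge0 => i _.
have mh : measurable_fun setT h.
  apply: measurable_prod => i _.
  exact: measurableT_comp (mf i) (measurable_tnth i).
have hyp E : measurable E ->
    \int[P]_x ((\1_E (tnth x j))%:E * (h x)%:E) = (fine c)%:E * m j E.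
  move=> mE.
  pose f' i := if i == j then \1_E else f i.
  have ok' : okf f'.
    split.
    - by move=> i x; rewrite /f'; case: ifP.
    - by move=> i; rewrite /f'; case: ifP => _ //; exact: measurable_indic.
    - move=> i; rewrite /f'; case: ifP => _ //.
      by rewrite integral_indic// setIT (le_lt_trans _ (mfin i))// le_measure// inE.
  have := IH (J :\ j) cJ' f' ok'.
  have -> : (fun x : X => (\prod_(i < K) f' i (tnth x i))%:E) =
      fun x => (\1_E (tnth x j))%:E * (h x)%:E.
    apply/funext => x; rewrite -EFinM (bigD1 j)//= /f' eqxx /h big_filter.
    by congr (_ * _)%:E; apply: eq_bigr => i /negbTE ->.
  move=> ->.
  rewrite (bigD1 j)//= /f' eqxx integral_indic// setIT fineK// muleC.
  congr (_ * _); apply: eq_bigr => i /negbTE -> //.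
  move=> i; rewrite in_setD1 negb_and negbK => /orP[/eqP ->|iJ].
    by exists E; split => //; rewrite /f' eqxx.
  rewrite /f'; case: eqP => [_|_]; last exact: hJ.
  by exists E.
have := push_dens P (m j) (fun x : X => tnth x j) h (fine c) (measurable_tnth j) h0 mh hyp
  (fun y => (f j y)%:E) (fun y => f0 j y) (proj2 (measurable_EFinP _ _) (mf j)).
have -> : (fun x : X => (\prod_(i < K) f i (tnth x i))%:E) =
    fun x => (f j (tnth x j))%:E * (h x)%:E.
  apply/funext => x; rewrite -EFinM (bigD1 j)//= /h big_filter//.
move=> ->; rewrite fineK// (bigD1 j)//= muleC. done.
Qed.

Lemma prod_integral (f : 'I_K -> T -> R) : okf f ->
  \int[P]_x (\prod_(i < K) f i (tnth x i))%:E = \prod_(i < K) \int[m i]_x (f i x)%:E.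
Proof.
move=> okf_f; apply: (@prodint_ind #|[set: 'I_K]%SET| [set: 'I_K]%SET) => // i.
by rewrite inE.
Qed.
End prodint.

Section helpers.
Local Open Scope ereal_scope.
Context {R : realType}.

Lemma int_indic d (X : measurableType d) (mu : {measure set X -> \bar R}) D (f : X -> \bar R) :
  \int[mu]_(x in D) f x = \int[mu]_x ((\1_D x)%:E * f x).
Proof.
by rewrite integral_mkcond epatch_indic; apply: eq_integral => x _; rewrite /= muleC.
Qed.

Lemma indic_rect d (T : measurableType d) K (A : 'I_K -> set T) (x : K.-tuple T) :
  \1_(rect A) x = (\prod_(i < K) \1_(A i) (tnth x i) :> R)%R.
Proof.
rewrite indicE; have [Ax|nAx] := pselect (rect A x).
  by rewrite mem_set// big1// => i _; rewrite indicE mem_set//; exact: Ax.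
rewrite memNset//; move/existsNP: nAx => [i nAi].
by rewrite (bigD1 i)//= indicE memNset// mul0r.
Qed.

Lemma measurable_inv_pos d (X : measurableType d) (f : X -> R) :
  (forall x, 0 < f x)%R -> measurable_fun setT f ->
  measurable_fun setT (fun x => (f x)^-1%R).
Proof.
move=> f0 mf.
have -> : (fun x => (f x)^-1%R) = fun x => expR (- ln (f x)).
  by apply/funext => x; rewrite expRN lnK// posrE.
apply: measurableT_comp => //; apply: measurableT_comp => //.
exact: measurableT_comp (@measurable_ln R) mf.
Qed.

Lemma dens_ratio d (T : measurableType d) (mu nu1 nu2 : {measure set T -> \bar R})
  (q1 q2 : T -> R) : (forall y, 0 < q1 y)%R -> (forall y, 0 <= q2 y)%R ->
  measurable_fun setT q1 -> measurable_fun setT q2 ->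
  (forall A, measurable A -> nu1 A = \int[mu]_(y in A) (q1 y)%:E) ->
  (forall A, measurable A -> nu2 A = \int[mu]_(y in A) (q2 y)%:E) ->
  forall A, measurable A ->
  \int[nu1]_y (\1_A y * (q2 y / q1 y))%:E = nu2 A.
Proof.
move=> q10 q20 mq1 mq2 h1 h2 A mA.
have hyp B : measurable B -> \int[mu]_y ((\1_B y)%:E * (q1 y)%:E) = 1%:E * nu1 B.
  by move=> mB; rewrite mul1e h1// [RHS]int_indic.
rewrite -[LHS]mul1e -(push_dens mu nu1 id q1 1%R (@measurable_id _ _ setT) (fun y => ltW (q10 y)) mq1 hyp).
- rewrite h2// [RHS]int_indic; apply: eq_integral => y _.
  rewrite -EFinM; congr EFin; rewrite /= -mulrA mulfVK//.
  by rewrite gt_eqF.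
- move=> y; rewrite lee_fin; apply: mulr_ge0 => //.
  by apply: divr_ge0 => //; exact: ltW.
- apply/measurable_EFinP; apply: measurable_funM => //.
  apply: measurable_funM => //; exact: measurable_inv_pos.
Qed.
End helpers.

Section dens_prod.
Local Open Scope ereal_scope.
Context {R : realType} {d : measure_display} {T : measurableType d} (K : nat).
Local Notation X := (K.-tuple T).
Variables (P1 P2 : probability X R) (m1 m2 : 'I_K -> probability T R).
Hypotheses (hP1 : is_product_measure (fun i => m1 i : set T -> \bar R) P1)
  (hP2 : is_product_measure (fun i => m2 i : set T -> \bar R) P2).
Variable rho : 'I_K -> T -> R.
Hypotheses (rho0 : forall i y, (0 <= rho i y)%R) (mrho : forall i, measurable_fun setT (rho i))
  (hrho : forall i A, measurable A -> \int[m1 i]_y (\1_A y * rho i y)%:E = m2 i A).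

Let rhoX (x : X) := (\prod_(i < K) rho i (tnth x i))%R.

Let rhoX0 x : (0 <= rhoX x)%R. Proof. by apply: prodr_ge0 => i _. Qed.
Let mrhoX : measurable_fun setT rhoX.
Proof. by apply: measurable_prod => i _; exact: measurableT_comp (mrho i) (measurable_tnth i). Qed.

Lemma dens_prod_set E : measurable E ->
  \int[P1]_x ((\1_E x)%:E * (rhoX x)%:E) = P2 E.
Proof.
move=> mE; rewrite -int_indic.
have mrhoXE : measurable_fun setT (fun x => (rhoX x)%:E) by exact/measurable_EFinP.
have okA (A : 'I_K -> set T) : (forall i, measurable (A i)) ->
    okf K (fun i => m1 i : {measure set T -> \bar R}) (fun i y => \1_(A i) y * rho i y)%R.
  move=> mA; split.
  - by move=> i y; apply: mulr_ge0.
  - by move=> i; apply: measurable_funM => //; exact: measurable_indic.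
  - by move=> i; rewrite hrho// (le_lt_trans (probability_le1 _ _))// ltry.
have mfin1 i : m1 i setT < +oo by rewrite probability_setT ltry.
have rhoXE0 x : 0 <= (rhoX x)%:E by rewrite lee_fin.
have ->: \int[P1]_(x in E) (rhoX x)%:E =
   mdens P1 (fun x => (rhoX x)%:E) rhoXE0 mrhoXE E by [].
apply: (@measure_unique_rect _ _ _ K (mdens P1 (fun x => (rhoX x)%:E) rhoXE0 mrhoXE) P2) => //.
- rewrite /= /mdens -[setT](rect_setT K) int_indic.
  under eq_integral do rewrite -EFinM indic_rect -big_split/=.
  rewrite (prod_integral K P1 (fun i => m1 i : {measure set T -> \bar R}) mfin1 hP1 _ (okA _ (fun _ => measurableT))).
  under eq_bigr do rewrite hrho//.
  by rewrite -hP2// rect_setT probability_setT ltry.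
- move=> A mA; rewrite /= /mdens int_indic.
  under eq_integral do rewrite -EFinM indic_rect -big_split/=.
  rewrite (prod_integral K P1 (fun i => m1 i : {measure set T -> \bar R}) mfin1 hP1 _ (okA _ mA)).
  by under eq_bigr do rewrite hrho//; rewrite hP2.
Qed.

Lemma dens_prod (g : X -> \bar R) : (forall x, 0 <= g x) -> measurable_fun setT g ->
  \int[P1]_x (g x * (rhoX x)%:E) = \int[P2]_x g x.
Proof.
move=> g0 mg.
have hyp A : measurable A -> \int[P1]_x ((\1_A x)%:E * (rhoX x)%:E) = 1%:E * P2 A.
  by move=> mA; rewrite mul1e dens_prod_set.
by rewrite (push_dens P1 P2 id rhoX 1%R (@measurable_id _ _ setT) rhoX0 mrhoX hyp g g0 mg) mul1e.
Qed.
End dens_prod.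

Section rev_prod.
Local Open Scope ereal_scope.
Context {R : realType} {d : measure_display} {T : measurableType d} (K : nat).
Local Notation X := (K.-tuple T).
Variables (P : probability X R) (mus : 'I_K -> probability T R)
  (pk : 'I_K -> R.-pker T ~> T) (Q : R.-pker X ~> X).
Hypotheses (hP : is_product_measure (fun i => mus i : set T -> \bar R) P)
  (hQ : forall th, is_product_measure (fun i => pk i (tnth th i) : set T -> \bar R) (Q th))
  (hrev : forall i, reversible (fun x => pk i x) (mus i)).

Lemma pker_le1 {d1 d2} {Y : measurableType d1} {Z : measurableType d2} (k : R.-pker Y ~> Z) y A :
  measurable A -> k y A <= 1.
Proof. by move=> mA; rewrite -(@prob_kernel _ _ _ _ _ k y) le_measure// inE. Qed.

Lemma pker_fin {d1 d2} {Y : measurableType d1} {Z : measurableType d2} (k : R.-pker Y ~> Z) y A :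
  measurable A -> k y A \is a fin_num.
Proof. by move=> mA; rewrite ge0_fin_numE// (le_lt_trans (pker_le1 k y _ mA))// ltry. Qed.

Lemma int_pker_le1 D A : measurable D -> measurable A -> \int[P]_(x in D) Q x A <= 1.
Proof.
move=> mD mA; apply: (@le_trans _ _ (\int[P]_(x in D) (cst 1) x)).
  apply: ge0_le_integral => //.
  - by apply: measurable_funTS; exact: measurable_kernel.
  - by move=> x _; exact: pker_le1.
by rewrite integral_cst// mul1e probability_le1.
Qed.

Let mfin i : (mus i : {measure set T -> \bar R}) setT < +oo.
Proof. by rewrite /= probability_setT ltry. Qed.

Lemma rect_int (As Bs : 'I_K -> set T) : (forall i, measurable (As i)) ->
  (forall i, measurable (Bs i)) ->
  \int[P]_(x in rect Bs) Q x (rect As) =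
  \prod_(i < K) \int[mus i]_(y in Bs i) pk i y (As i).
Proof.
move=> mAs mBs; rewrite int_indic.
have -> : (fun x : X => (\1_(rect Bs) x)%:E * Q x (rect As)) =
    fun x => (\prod_(i < K) (\1_(Bs i) (tnth x i) * fine (pk i (tnth x i) (As i))))%:E.
  apply/funext => x; rewrite hQ// indic_rect.
  rewrite (eq_bigr (fun i => (fine (pk i (tnth x i) (As i)))%:E)); last first.
    by move=> i _; rewrite fineK// pker_fin.
  by rewrite prodEFin -EFinM big_split.
have okA : okf K (fun i => mus i : {measure set T -> \bar R})
    (fun i y => \1_(Bs i) y * fine (pk i y (As i)))%R.
  split.
  - by move=> i y; apply: mulr_ge0 => //; apply: fine_ge0.
  - move=> i; apply: measurable_funM => //; try exact: measurable_indic.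
    by apply: measurableT_comp => //; exact: measurable_kernel.
  - move=> i; apply: (@le_lt_trans _ _ (\int[mus i]_y (cst 1) y)); last first.
      by rewrite integral_cst// mul1e /= probability_setT ltry.
    apply: ge0_le_integral => //.
    all: try (by move=> y _; rewrite lee_fin; apply: mulr_ge0 => //; apply: fine_ge0).
    all: try (by apply/measurable_EFinP; apply: measurable_funM => //; try exact: measurable_indic;
      apply: measurableT_comp => //; exact: measurable_kernel).
    move=> y _; rewrite lee_fin /= indicE; case: (_ \in _); last by rewrite mul0r.
    rewrite mul1r -lee_fin fineK ?pker_fin//; exact: pker_le1.
rewrite (prod_integral K P _ mfin hP _ okA).
apply: eq_bigr => i _; rewrite [RHS]int_indic; apply: eq_integral => y _.
by rewrite EFinM fineK// pker_fin.
Qed.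

Lemma rev_rect (As Bs : 'I_K -> set T) : (forall i, measurable (As i)) ->
  (forall i, measurable (Bs i)) ->
  \int[P]_(x in rect Bs) Q x (rect As) = \int[P]_(x in rect As) Q x (rect Bs).
Proof.
move=> mAs mBs; rewrite !rect_int//; apply: eq_bigr => i _.
exact: hrev.
Qed.

Let Q0 A x : 0 <= Q x A. Proof. exact: measure_ge0. Qed.
Let mQ A : measurable A -> measurable_fun setT (fun x => Q x A).
Proof. exact: measurable_kernel. Qed.
Let mk : forall U, measurable U -> measurable_fun setT ((fun x => Q x : {measure set X -> \bar R}) ^~ U).
Proof. exact: measurable_kernel. Qed.

Lemma rev_rectA (As : 'I_K -> set T) B : (forall i, measurable (As i)) -> measurable B ->
  \int[P]_(x in B) Q x (rect As) = \int[P]_(x in rect As) Q x B.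
Proof.
move=> mAs mB.
have mA : measurable (rect As) by exact: measurable_rect.
have := @measure_unique_rect _ _ _ K
  (mdens P (fun x => Q x (rect As)) (Q0 (rect As)) (mQ _ mA))
  (mkint P (rect As) (fun x => Q x) mk).
apply => //.
- by rewrite /= /mdens (le_lt_trans (int_pker_le1 _ _ _ _))// ltry.
- by move=> Bs mBs; rewrite /= /mdens /mkint rev_rect.
Qed.

Lemma rev_Q : reversible (fun x => Q x) P.
Proof.
move=> A B mA mB.
have := @measure_unique_rect _ _ _ K
  (mkint P B (fun x => Q x) mk)
  (mdens P (fun x => Q x B) (Q0 B) (mQ _ mB)).
apply => //.
- by rewrite /= /mkint (le_lt_trans (int_pker_le1 _ _ _ _))// ltry.
- by move=> As mAs; rewrite /= /mdens /mkint rev_rectA.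
Qed.
End rev_prod.

Section main.
Local Open Scope ereal_scope.
Context (R : realType) (d : measure_display) (T : measurableType d)
  (mupr : probability T R) (Phi : T -> R) (mPhi : measurable_fun setT Phi)
  (K : nat) (Temp : 'I_K -> \bar R) (mu : 'I_K -> probability T R).
Hypothesis hmu : forall (k : 'I_K) (A : set T), measurable A ->
     mu k A = (\int[mupr]_(x in A) (tdensity mupr Phi (Temp k) x)%:E)%E.

Let pi k := tdensity mupr Phi (Temp k).

Lemma mtempered k : measurable_fun setT (tempered Phi (Temp k)).
Proof.
rewrite /tempered; apply: measurableT_comp => //.
apply: measurableT_comp => //; apply: measurable_funM => //.
Qed.

Lemma normconst_gt0 k : (0 < fine (normconst mupr Phi (Temp k)))%R.
Proof.
rewrite lt_neqAle fine_ge0 ?andbT; last first.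
  by apply: integral_ge0 => x _; rewrite lee_fin expR_ge0.
apply/negP => /eqP Z0.
have : \int[mupr]_(x in setT) (tdensity mupr Phi (Temp k) x)%:E = 0.
  by apply: integral0_eq => x _; rewrite /tdensity -Z0 invr0 mulr0.
rewrite -hmu// probability_setT => /eqP; by rewrite onee_eq0.
Qed.

Lemma pi_gt0 k x : (0 < pi k x)%R.
Proof. by rewrite /pi /tdensity divr_gt0// ?expR_gt0// normconst_gt0. Qed.

Lemma mpi k : measurable_fun setT (pi k).
Proof. by apply: measurable_funM => //; exact: mtempered. Qed.

Local Notation X := (K.-tuple T).
Variables (musig : {perm 'I_K} -> probability X R).
Hypothesis hmusig : forall s : {perm 'I_K},
     is_product_measure (fun i : 'I_K => mu (s i)) (musig s).

Let id1 : {perm 'I_K} := 1%g.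
Let P1 := musig id1.

Definition rho (s : {perm 'I_K}) (x : X) : R :=
  (\prod_(i < K) (pi (s i) (tnth x i) / pi (id1 i) (tnth x i)))%R.

Lemma rho_ge0 s x : (0 <= rho s x)%R.
Proof.
apply: prodr_ge0 => i _; apply: divr_ge0; apply: ltW; exact: pi_gt0.
Qed.

Lemma mrho s : measurable_fun setT (rho s).
Proof.
apply: measurable_prod => i _; apply: measurable_funM.
  exact: measurableT_comp (mpi _) (measurable_tnth i).
apply: measurable_inv_pos; first by move=> x; exact: pi_gt0.
exact: measurableT_comp (mpi _) (measurable_tnth i).
Qed.

Let hrho s i A : measurable A ->
  \int[mu (id1 i)]_y (\1_A y * (pi (s i) y / pi (id1 i) y))%:E = mu (s i) A.
Proof.
move=> mA; apply: (@dens_ratio R d T mupr (mu (id1 i)) (mu (s i))) => //.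
- by move=> y; exact: pi_gt0.
- by move=> y; apply: ltW; exact: pi_gt0.
- exact: mpi.
- exact: mpi.
- by move=> B mB; exact: hmu.
- by move=> B mB; exact: hmu.
Qed.

Lemma dens_s s (g : X -> \bar R) : (forall x, 0 <= g x) -> measurable_fun setT g ->
  \int[P1]_x (g x * (rho s x)%:E) = \int[musig s]_x g x.
Proof.
move=> g0 mg.
have := @dens_prod R d T K P1 (musig s) (fun i => mu (id1 i)) (fun i => mu (s i))
  (hmusig id1) (hmusig s) (fun i y => pi (s i) y / pi (id1 i) y)%R.
move=> /(_ _ _ (hrho s)) -> //.
- by move=> i y; apply: divr_ge0; apply: ltW; exact: pi_gt0.
- move=> i; apply: measurable_funM; first exact: mpi.
  by apply: measurable_inv_pos; [move=> y; exact: pi_gt0| exact: mpi].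
Qed.

Lemma dens_set_s s E : measurable E ->
  \int[P1]_x ((\1_E x)%:E * (rho s x)%:E) = musig s E.
Proof.
move=> mE.
have := @dens_prod_set R d T K P1 (musig s) (fun i => mu (id1 i)) (fun i => mu (s i))
  (hmusig id1) (hmusig s) (fun i y => pi (s i) y / pi (id1 i) y)%R.
move=> /(_ _ _ (hrho s)) -> //.
- by move=> i y; apply: divr_ge0; apply: ltW; exact: pi_gt0.
- move=> i; apply: measurable_funM; first exact: mpi.
  by apply: measurable_inv_pos; [move=> y; exact: pi_gt0| exact: mpi].
Qed.

Lemma rhoE s x : rho s x = (swapped_density pi s x / swapped_density pi id1 x)%R.
Proof. by rewrite /rho prodf_div. Qed.

Variables (SK : {set {perm 'I_K}}) (muW : probability X R).
Hypothesis hmuW : forall A : set X, measurable A ->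
     muW A = (((#|SK|%:R)^-1)%:E * \sum_(s in SK) musig s A)%E.

Definition H (x : X) : R := ((#|SK|%:R)^-1 * \sum_(s in SK) rho s x)%R.

Lemma H_ge0 x : (0 <= H x)%R.
Proof.
by apply: mulr_ge0; [rewrite invr_ge0 ler0n | apply: sumr_ge0 => s _; exact: rho_ge0].
Qed.

Lemma mH : measurable_fun setT H.
Proof.
apply: measurable_funM => //.
have -> : (fun x => \sum_(s in SK) rho s x)%R =
    (fun x => \sum_(s <- index_enum {perm 'I_K}) (if s \in SK then rho s x else 0))%R.
  by apply/funext => x; rewrite big_mkcond.
apply: measurable_sum => s; case: (s \in SK) => //; exact: mrho.
Qed.

Lemma muW_dens E : measurable E ->
  muW E = \int[P1]_x ((\1_E x)%:E * (H x)%:E).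
Proof.
move=> mE; rewrite hmuW//.
under eq_bigr => s _ do rewrite -(dens_set_s s _ mE).
rewrite -big_filter -ge0_integral_sum//; last 2 first.
- move=> s; apply: emeasurable_funM; apply/measurable_EFinP => //; exact: mrho.
- by move=> s x _; rewrite mule_ge0// lee_fin// rho_ge0.
rewrite -ge0_integralZl//.
all: try (by move=> x _; apply: sume_ge0 => s _; rewrite mule_ge0// lee_fin// rho_ge0).
all: try (by rewrite lee_fin invr_ge0 ler0n).
all: try (by apply: emeasurable_sum => s; apply: emeasurable_funM; apply/measurable_EFinP => //;
  exact: mrho).
apply: eq_integral => x _; rewrite big_filter.
under eq_bigr do rewrite -EFinM.
by rewrite sumEFin -!EFinM; congr EFin; rewrite /H -mulr_sumr mulrCA.
Qed.

Lemma muW_int (g : X -> \bar R) : (forall x, 0 <= g x) -> measurable_fun setT g ->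
  \int[muW]_x g x = \int[P1]_x (g x * (H x)%:E).
Proof.
move=> g0 mg.
have hyp A : measurable A -> \int[P1]_x ((\1_A (id x))%:E * (H x)%:E) = 1%:E * muW A.
  by move=> mA; rewrite mul1e muW_dens.
by rewrite (push_dens P1 muW id H 1%R (@measurable_id _ _ setT) H_ge0 mH hyp g g0 mg) mul1e.
Qed.

Hypothesis hSK0 : (0 < #|SK|)%N.
Variables (p : 'I_K -> R.-pker T ~> T)
  (psig : {perm 'I_K} -> R.-pker X ~> X).
Hypotheses (hrev : forall k : 'I_K, reversible (fun x => p k x) (mu k))
  (hpsig : forall (s : {perm 'I_K}) (th : X),
     is_product_measure (fun i : 'I_K => p (s i) (tnth th i)) (psig s th)).

Let swd s x := swapped_density pi s x.
Let S x := (\sum_(s' in SK) swd s' x)%R.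

Lemma swd_gt0 s x : (0 < swd s x)%R.
Proof. by apply: prodr_gt0 => i _; exact: pi_gt0. Qed.

Lemma mswd s : measurable_fun setT (swd s).
Proof.
apply: measurable_prod => i _.
exact: measurableT_comp (mpi _) (measurable_tnth i).
Qed.

Lemma S_gt0 x : (0 < S x)%R.
Proof.
move: hSK0; rewrite card_gt0 => /set0Pn [s0 s0SK].
rewrite /S (bigD1 s0)//= ltr_pwDl//; first exact: swd_gt0.
by apply: sumr_ge0 => s _; apply: ltW; exact: swd_gt0.
Qed.

Lemma mS : measurable_fun setT S.
Proof.
have -> : S = (fun x => \sum_(s <- index_enum {perm 'I_K}) (if s \in SK then swd s x else 0))%R.
  by apply/funext => x; rewrite /S big_mkcond.
apply: measurable_sum => s; case: (s \in SK) => //; exact: mswd.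
Qed.

Lemma w_ge0 s x : (0 <= swap_weight pi SK s x)%R.
Proof.
by apply: divr_ge0; apply: ltW; [exact: swd_gt0 | exact: S_gt0].
Qed.

Lemma mw s : measurable_fun setT (swap_weight pi SK s).
Proof.
apply: measurable_funM; first exact: mswd.
apply: measurable_inv_pos; [exact: S_gt0 | exact: mS].
Qed.

Lemma wH s x : (swap_weight pi SK s x * H x = (#|SK|%:R)^-1 * rho s x)%R.
Proof.
have S0 : S x != 0%R by rewrite gt_eqF// S_gt0.
have s10 : swd id1 x != 0%R by rewrite gt_eqF// swd_gt0.
rewrite /H rhoE.
under eq_bigr do rewrite rhoE.
rewrite -mulr_suml.
rewrite /swap_weight -/(S x) -/(swd s x) -/(swd id1 x).
by rewrite mulrCA; congr (_ * _)%R; rewrite mulrA divfK.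
Qed.

Lemma wgpt_ge0 A x : 0 <= wgpt_kernel pi SK (fun s th => psig s th) x A.
Proof.
by apply: sume_ge0 => s _; rewrite mule_ge0// lee_fin w_ge0.
Qed.

Lemma mwgpt A : measurable A ->
  measurable_fun setT (fun x => wgpt_kernel pi SK (fun s th => psig s th) x A).
Proof.
move=> mA.
have -> : (fun x => wgpt_kernel pi SK (fun s th => psig s th) x A) =
  (fun x => \sum_(s <- index_enum {perm 'I_K})
     (if s \in SK then (swap_weight pi SK s x)%:E * psig s x A else 0)).
  by apply/funext => x; rewrite /wgpt_kernel big_mkcond.
apply: emeasurable_sum => s; case: (s \in SK) => //.
apply: emeasurable_funM; first by apply/measurable_EFinP; exact: mw.
exact: measurable_kernel.
Qed.

Lemma mIQ B A s : measurable B -> measurable A ->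
  measurable_fun setT (fun x => (\1_B x)%:E * psig s x A).
Proof.
move=> mB mA; apply: emeasurable_funM.
  by apply/measurable_EFinP; exact: measurable_indic.
exact: measurable_kernel.
Qed.

Lemma mIQr B A s : measurable B -> measurable A ->
  measurable_fun setT (fun x => (\1_B x)%:E * psig s x A * (rho s x)%:E).
Proof.
move=> mB mA; apply: emeasurable_funM; first exact: mIQ.
by apply/measurable_EFinP; exact: mrho.
Qed.

Lemma key A B : measurable A -> measurable B ->
  \int[muW]_(x in B) wgpt_kernel pi SK (fun s th => psig s th) x A =
  ((#|SK|%:R)^-1)%:E * \sum_(s in SK) \int[musig s]_(x in B) psig s x A.
Proof.
move=> mA mB.
rewrite int_indic muW_int; last 2 first.
- by move=> x; rewrite mule_ge0// ?lee_fin// wgpt_ge0.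
- apply: emeasurable_funM; first exact/measurable_EFinP/measurable_indic.
  exact: mwgpt.
transitivity (\int[P1]_x \sum_(s in SK)
   (((#|SK|%:R)^-1)%:E * (((\1_B x)%:E * psig s x A) * (rho s x)%:E))).
  apply: eq_integral => x _.
  rewrite /wgpt_kernel ge0_sume_distrr; last first.
    by move=> s _; rewrite mule_ge0// lee_fin w_ge0.
  rewrite ge0_sume_distrl; last first.
    by move=> s _; rewrite !mule_ge0// lee_fin w_ge0.
  apply: eq_bigr => s _.
  rewrite -[psig s x A]fineK ?pker_fin//.
  rewrite -!EFinM; congr EFin.
  transitivity (\1_B x * fine (psig s x A) * (swap_weight pi SK s x * H x))%R.
    by ring.
  by rewrite wH; ring.
under eq_integral do rewrite -big_filter.
rewrite ge0_integral_sum//; last 2 first.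
- by move=> s; apply: emeasurable_funM => //; exact: mIQr.
- move=> s x _; rewrite mule_ge0 ?lee_fin ?invr_ge0 ?ler0n//.
  by rewrite !mule_ge0// lee_fin rho_ge0.
rewrite big_filter ge0_sume_distrr; last first.
  by move=> s _; apply: integral_ge0.
apply: eq_bigr => s _.
rewrite ge0_integralZl//.
all: try (by move=> x _; rewrite !mule_ge0// lee_fin rho_ge0).
all: try (by rewrite lee_fin invr_ge0 ler0n).
all: try (exact: mIQr).
rewrite dens_s; last 2 first.
- by move=> x; rewrite mule_ge0.
- exact: mIQ.
by rewrite [in RHS]int_indic.
Qed.

Lemma main_rev : reversible (wgpt_kernel pi SK (fun s th => psig s th)) muW.
Proof.
move=> A B mA mB; rewrite !key//; congr (_ * _); apply: eq_bigr => s _.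
exact: (rev_Q K (musig s) (fun i => mu (s i)) (fun i => p (s i)) (psig s)
  (hmusig s) (hpsig s) (fun i => hrev (s i)) A B mA mB).
Qed.

End main.


Theorem proposition4
  (R : realType) (d : measure_display) (T : measurableType d)
  (mupr : probability T R) (Phi : T -> R) (mPhi : measurable_fun setT Phi)
  (K : nat) (hK : (0 < K)%N)
  (Temp : 'I_K -> \bar R)
  (hT1 : forall i : 'I_K, val i = 0%N -> Temp i = 1%E)
  (hTinc : forall i j : 'I_K, (i < j)%N -> (Temp i < Temp j)%E)
  (hZ : forall k : 'I_K,
     mupr.-integrable setT (fun x => (tempered Phi (Temp k) x)%:E))
  (mu : 'I_K -> probability T R)
  (hmu : forall (k : 'I_K) (A : set T), measurable A ->
     mu k A = (\int[mupr]_(x in A) (tdensity mupr Phi (Temp k) x)%:E)%E)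
  (p : 'I_K -> R.-pker T ~> T)
  (hrev : forall k : 'I_K, reversible (fun x => p k x) (mu k))
  (SK : {set {perm 'I_K}})
  (hSK0 : (0 < #|SK|)%N)
  (hSKinv : forall s, s \in SK -> s^-1%g \in SK)
  (psig : {perm 'I_K} -> R.-pker (K.-tuple T) ~> (K.-tuple T))
  (hpsig : forall (s : {perm 'I_K}) (th : K.-tuple T),
     is_product_measure (fun i : 'I_K => p (s i) (tnth th i)) (psig s th))
  (musig : {perm 'I_K} -> probability (K.-tuple T) R)
  (hmusig : forall s : {perm 'I_K},
     is_product_measure (fun i : 'I_K => mu (s i)) (musig s))
  (muW : probability (K.-tuple T) R)
  (hmuW : forall A : set (K.-tuple T), measurable A ->
     muW A = (((#|SK|%:R)^-1)%:E * \sum_(s in SK) musig s A)%E) :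
  reversible
    (wgpt_kernel (fun k => tdensity mupr Phi (Temp k)) SK (fun s th => psig s th))
    muW.
Proof.
exact: (@main_rev R d T mupr Phi mPhi K Temp mu hmu musig hmusig SK muW hmuW hSK0 p psig hrev hpsig).
Qed.
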